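(* Let $\{E^A_{\alpha,k}\}$ be an informationally complete $(N_A,M_A)$ POVM on $\mathbb{C}^{d_A}$ with parameter $x_A$ and $\{E^B_{\beta,j}\}$ an informationally complete $(N_B,M_B)$ POVM on $\mathbb{C}^{d_B}$ with parameter $x_B$. For every separable state $\rho_{AB}$ on $\mathbb{C}^{d_A}\otimes\mathbb{C}^{d_B}$, $$\sum_{\alpha=1}^{N_A}\sum_{k=1}^{M_A}\sum_{\beta=1}^{N_B}\sum_{j=1}^{M_B}\mathrm{tr}\big[(E^A_{\alpha,k}\otimes E^B_{\beta,j})\rho_{AB}\big]^2\le\frac{(d_A-1)(d_A^2+M_A^2x_A)}{d_AM_A(M_A-1)}\cdot\frac{(d_B-1)(d_B^2+M_B^2x_B)}{d_BM_B(M_B-1)}.$$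
   Context: An $(N,M)$ POVM on $\mathbb{C}^d$ (with $M\ge 2$) consists of $N$ POVMs $\{E_{\alpha,k}\mid k=1,\dots,M\}$, $\alpha=1,\dots,N$, satisfying $\mathrm{tr}(E_{\alpha,k})=d/M$, $\mathrm{tr}(E_{\alpha,k}^2)=x$, $\mathrm{tr}(E_{\alpha,k}E_{\alpha,l})=\frac{d-Mx}{M(M-1)}$ for $l\ne k$, and $\mathrm{tr}(E_{\alpha,k}E_{\beta,l})=d/M^2$ for $\beta\ne\alpha$, where $\frac{d}{M^2}<x\le\min\{\frac{d^2}{M^2},\frac dM\}$; it is informationally complete if $N(M-1)=d^2-1$. A state is separable if it is a convex combination of product states $\rho_A^i\otimes\rho_B^i$. *)

(* Defs.v *)
From HB Require Import structures.
From mathcomp Require Import all_boot all_order all_algebra.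
From mathcomp Require Export mxtens.
Set Implicit Arguments. Unset Strict Implicit. Unset Printing Implicit Defensive.
Import Order.TTheory GRing.Theory Num.Theory.
Local Open Scope ring_scope.

Section QDefs.
Variable C : numClosedFieldType.

Definition adjmx (m n : nat) (A : 'M[C]_(m, n)) : 'M[C]_(n, m) :=
  map_mx Num.conj (trmx A).

Definition psd (d : nat) (A : 'M[C]_d) : Prop :=
  adjmx A = A /\ forall u : 'cV[C]_d, 0 <= (adjmx u *m A *m u) 0 0.

Definition is_POVM (d M : nat) (E : 'I_M -> 'M[C]_d) : Prop :=
  (forall k, psd (E k)) /\ \sum_(k < M) E k = 1%:M.

Definition NM_POVM (d N M : nat) (x : C) (E : 'I_N -> 'I_M -> 'M[C]_d) : Prop :=
  (2 <= M)%N /\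
  (d%:R / M%:R ^+ 2 < x /\ x <= d%:R ^+ 2 / M%:R ^+ 2 /\ x <= d%:R / M%:R) /\
  (forall a, is_POVM (E a)) /\
  (forall a k, \tr (E a k) = d%:R / M%:R) /\
  (forall a k, \tr (E a k *m E a k) = x) /\
  (forall a k l, k != l ->
      \tr (E a k *m E a l) = (d%:R - M%:R * x) / (M%:R * (M%:R - 1))) /\
  (forall a b k l, a != b -> \tr (E a k *m E b l) = d%:R / M%:R ^+ 2).

Definition IC_NM_POVM (d N M : nat) (x : C) (E : 'I_N -> 'I_M -> 'M[C]_d) : Prop :=
  NM_POVM x E /\ (N * (M - 1) = d ^ 2 - 1)%N.

Definition state (d : nat) (rho : 'M[C]_d) : Prop := psd rho /\ \tr rho = 1.

Definition separable (dA dB : nat) (rho : 'M[C]_(dA * dB)) : Prop :=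
  exists (n : nat) (p : 'I_n -> C) (rA : 'I_n -> 'M[C]_dA) (rB : 'I_n -> 'M[C]_dB),
    [/\ forall i, 0 <= p i, \sum_(i < n) p i = 1,
        forall i, state (rA i), forall i, state (rB i) &
        rho = \sum_(i < n) p i *: (rA i *t rB i)].

Definition povm_bound (d M : nat) (x : C) : C :=
  (d%:R - 1) * (d%:R ^+ 2 + M%:R ^+ 2 * x) / (d%:R * M%:R * (M%:R - 1)).

End QDefs.

(* Main.v *)
Require Import Defs.
From HB Require Import structures.
From mathcomp Require Import all_boot all_order all_algebra.
From mathcomp Require Import mxtens ring.
Import Order.TTheory GRing.Theory Num.Theory.
Local Open Scope ring_scope.

Set Implicit Arguments. Unset Strict Implicit.
Section Aux.
Variable C : numClosedFieldType.

Lemma mxtrace_tens (m n : nat) (A : 'M[C]_m) (B : 'M[C]_n) :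
  \tr (A *t B) = \tr A * \tr B.
Proof.
rewrite /mxtrace mulr_sum; apply: eq_bigr => k _.
rewrite -[in LHS](mxtens_unindexK k).
by case: (mxtens_unindex k) => i j; rewrite tensmxE.
Qed.

Lemma adjE (m n : nat) (A : 'M[C]_(m, n)) i j : adjmx A i j = (A j i)^*.
Proof. by rewrite !mxE. Qed.

Lemma adj_mul (m n p : nat) (A : 'M[C]_(m, n)) (B : 'M[C]_(n, p)) :
  adjmx (A *m B) = adjmx B *m adjmx A.
Proof.
apply/matrixP => i j; rewrite !mxE rmorph_sum; apply: eq_bigr => k _.
by rewrite !mxE rmorphM mulrC.
Qed.

Lemma tr_adj (n : nat) (A : 'M[C]_n) : \tr (adjmx A) = (\tr A)^*.
Proof. rewrite /mxtrace rmorph_sum; apply: eq_bigr => i _; by rewrite !mxE. Qed.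

Lemma herm_tr_real (n : nat) (A B : 'M[C]_n) :
  adjmx A = A -> adjmx B = B -> (\tr (A *m B))^* = \tr (A *m B).
Proof. by move=> hA hB; rewrite -tr_adj adj_mul hA hB mxtrace_mulC. Qed.

Lemma herm_entry (n : nat) (A : 'M[C]_n) i j : adjmx A = A -> A j i = (A i j)^*.
Proof. by move=> hA; rewrite -{1}hA adjE. Qed.

Lemma tr_sq_ge0 (n : nat) (Z : 'M[C]_n) : adjmx Z = Z -> 0 <= \tr (Z *m Z).
Proof.
move=> hZ; rewrite /mxtrace; apply: sumr_ge0 => i _; rewrite mxE.
apply: sumr_ge0 => j _; rewrite (herm_entry i j hZ); exact: mul_conjC_ge0.
Qed.

Lemma quadE (n : nat) (A : 'M[C]_n) (u : 'cV[C]_n) :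
  (adjmx u *m A *m u) 0 0 = \sum_k (u k 0)^* * \sum_l A k l * u l 0.
Proof.
by rewrite -mulmxA mxE; apply: eq_bigr => k _; rewrite !mxE.
Qed.

Lemma sum2 (n : nat) (g : 'I_n -> C) i j (a b : C) : i != j ->
  \sum_l g l * (if l == i then a else if l == j then b else 0) = g i * a + g j * b.
Proof.
move=> hij; rewrite (bigD1 i) //= eqxx (bigD1 j) /=; last by rewrite eq_sym.
rewrite eq_sym (negbTE hij) eqxx big1 ?addr0 // => l /andP[/negbTE -> /negbTE ->].
by rewrite mulr0.
Qed.

Lemma sum1 (n : nat) (g : 'I_n -> C) i (a : C) :
  \sum_l g l * (if l == i then a else 0) = g i * a.
Proof.
rewrite (bigD1 i) //= eqxx big1 ?addr0 // => l /negbTE ->; by rewrite mulr0.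
Qed.

Lemma psd_diag (n : nat) (A : 'M[C]_n) i : psd A -> 0 <= A i i.
Proof.
move=> hA; have := hA.2 (\col_k (if k == i then 1 else 0)).
rewrite quadE (eq_bigr (fun k => (\sum_l A k l * (if l == i then 1 else 0)) *
   (if k == i then 1 else 0))); last first.
  move=> k _; rewrite mulrC !mxE; congr (_ * _); first by apply: eq_bigr => l _; rewrite mxE.
  by case: ifP => _; rewrite ?rmorph1 ?rmorph0.
by rewrite sum1 sum1 !mulr1.
Qed.

Lemma psd_diag_real (n : nat) (A : 'M[C]_n) i : psd A -> (A i i)^* = A i i.
Proof. by move=> hA; rewrite -(herm_entry i i hA.1). Qed.

Lemma psd_quad2 (n : nat) (A : 'M[C]_n) i j (a b : C) : psd A -> i != j ->
 0 <= (A i i * a + A i j * b) * a^* + (A j i * a + A j j * b) * b^*.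
Proof.
move=> hA hij; have := hA.2 (\col_k (if k == i then a else if k == j then b else 0)).
rewrite quadE (eq_bigr (fun k => (\sum_l A k l * (if l == i then a else if l == j then b else 0)) *
   (if k == i then a^* else if k == j then b^* else 0))); last first.
  move=> k _; rewrite mulrC !mxE; congr (_ * _); first by apply: eq_bigr => l _; rewrite mxE.
  by case: ifP => _; last case: ifP => _; rewrite ?rmorph0.
by rewrite sum2 // sum2 // sum2.
Qed.

Lemma psd_minor (n : nat) (A : 'M[C]_n) i j : psd A ->
  A i j * A j i <= A i i * A j j.
Proof.
move=> hA; have [<-|hij] := eqVneq i j; first by [].
have hji : j != i by rewrite eq_sym.
have H1 : forall i j, i != j -> 0 <= A i i * (A i i * A j j - A j i * A i j).
  move=> i' j' h; have := psd_quad2 (- A i' j') (A i' i') hA h.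
  rewrite (psd_diag_real i' hA) (herm_entry i' j' hA.1).
  have -> : A i' i' * - A i' j' + A i' j' * A i' i' = 0 by ring.
  by rewrite mul0r add0r; congr (_ <= _); ring.
have H2 : forall i j, i != j -> A i i = 0 -> 0 <= A j j - 2 * (A j i * A i j).
  move=> i' j' h h0; have := psd_quad2 (- A i' j') 1 hA h.
  rewrite (herm_entry i' j' hA.1) h0 rmorph1 mulr1.
  by congr (_ <= _); rewrite rmorphN; ring.
have hii := psd_diag i hA; have hjj := psd_diag j hA.
rewrite le0r in hii; case/orP: hii => [/eqP hi0|hi].
  rewrite le0r in hjj; case/orP: hjj => [/eqP hj0|hj].
    have := H2 _ _ hij hi0; rewrite hj0 hi0 sub0r oppr_ge0 mul0r => h.
    rewrite mulrC; move: h; rewrite pmulr_rle0 //; exact: ltr0Sn.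
  have := H1 _ _ hji; rewrite pmulr_rge0 // subr_ge0 => h.
  by rewrite [A i i * _]mulrC.
have := H1 _ _ hij; rewrite pmulr_rge0 // subr_ge0.
by rewrite mulrC.
Qed.

Lemma tr_sq_le (n : nat) (A : 'M[C]_n) : psd A -> \tr (A *m A) <= (\tr A) ^+ 2.
Proof.
move=> hA; rewrite expr2 /mxtrace big_distrl /=; apply: ler_sum => i _.
rewrite mxE big_distrr /=; apply: ler_sum => j _; exact: psd_minor.
Qed.
End Aux.

Set Implicit Arguments. Unset Strict Implicit.
Section S2.
Variable C : numClosedFieldType.

Lemma adjB (m n : nat) (A B : 'M[C]_(m, n)) : adjmx (A - B) = adjmx A - adjmx B.
Proof. by apply/matrixP => i j; rewrite !mxE rmorphB. Qed.
Lemma adjZ (m n : nat) (s : C) (A : 'M[C]_(m, n)) : adjmx (s *: A) = s^* *: adjmx A.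
Proof. by apply/matrixP => i j; rewrite !mxE rmorphM. Qed.
Lemma adj_sum (m n : nat) I (r : seq I) (F : I -> 'M[C]_(m, n)) :
  adjmx (\sum_(i <- r) F i) = \sum_(i <- r) adjmx (F i).
Proof.
apply/matrixP => i j; rewrite !mxE !summxE rmorph_sum; apply: eq_bigr => k _.
by rewrite !mxE.
Qed.
Lemma adj_scalar (n : nat) (s : C) : adjmx (s%:M : 'M_n) = s^*%:M.
Proof. by apply/matrixP => i j; rewrite !mxE rmorphMn eq_sym. Qed.

Lemma sq_ge0_real (y : C) : y^* = y -> 0 <= y ^+ 2.
Proof. by move=> h; rewrite expr2 -{2}h mul_conjC_ge0. Qed.

Lemma povm_single (d N M : nat) (x : C) (E : 'I_N -> 'I_M -> 'M[C]_d) (rho : 'M[C]_d) :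
  IC_NM_POVM x E -> state rho ->
  \sum_(a < N) \sum_(k < M) (\tr (E a k *m rho)) ^+ 2 <= povm_bound d M x.
Proof.
case=> [[HM [[Hx1 [Hx2 _]] [HP [Htr [Hxx [Hkl Hab]]]]]] HNM] [hr htr1].
have hM0 : M%:R != 0 :> C by rewrite pnatr_eq0 -lt0n (leq_trans _ HM).
have hM1e : (M%:R - 1 : C) = (M - 1)%:R by rewrite natrB // ltnW.
have hM1 : M%:R - 1 != 0 :> C by rewrite hM1e pnatr_eq0 subn_eq0 -ltnNge.
have hd0 : d != 0%N.
  apply/eqP => d0; move: Hx1 Hx2; rewrite d0 mulr0n mul0r expr0n /= mul0r => h1 h2.
  by have := lt_le_trans h1 h2; rewrite ltxx.
have hdC : d%:R != 0 :> C by rewrite pnatr_eq0.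
set m : C := M%:R^-1.
set s : C := d%:R^-1.
pose v a k := \tr (E a k *m rho) - m.
have pv : forall a k, \tr (E a k *m rho) = v a k + m by move=> a k; rewrite /v subrK.
have sump : forall a, \sum_k \tr (E a k *m rho) = 1.
  by move=> a; rewrite -linear_sum -mulmx_suml (HP a).2 mul1mx; exact: htr1.
have sumv : forall a, \sum_k v a k = 0.
  by move=> a; rewrite sumrB sump sumr_const card_ord -mulr_natr mulVf // subrr.
set e : C := (d%:R - M%:R * x) / (M%:R * (M%:R - 1)).
set c : C := x - e.
have hc : 0 < c.
  have h1 : d%:R < x * M%:R ^+ 2 by rewrite -ltr_pdivrMr // exprn_gt0 // ltr0n (leq_trans _ HM).
  have -> : c = (x * M%:R ^+ 2 - d%:R) / (M%:R * (M%:R - 1)) by rewrite /c /e; field; rewrite hM0 hM1.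
  apply: divr_gt0; first by rewrite subr_gt0.
  rewrite hM1e; apply: mulr_gt0; rewrite ltr0n ?subn_gt0 //; exact: (leq_trans _ HM).
have hxr : x^* = x.
  have : (x - d%:R / M%:R ^+ 2)^* = x - d%:R / M%:R ^+ 2.
    by apply: conj_Creal; apply: gtr0_real; rewrite subr_gt0.
  by rewrite rmorphB rmorphM fmorphV rmorphXn !rmorph_nat => /addIr.
have hcr : c^* = c.
  by rewrite /c /e !(rmorphB, rmorphM, fmorphV, rmorphXn, rmorph_nat, rmorph1) -[Num.Num_conj__canonical__GRing_RMorphism C x]/(x^*) hxr.
have hvr : forall a k, (v a k)^* = v a k.
  move=> a k; apply/CrealP; rewrite rpredB //; apply/CrealP; first exact: herm_tr_real ((HP a).1 k).1 hr.1.
  by rewrite /m fmorphV rmorph_nat.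
have gram : forall a k b l, \tr (E a k *m E b l) =
    if b == a then (if l == k then x else e) else d%:R / M%:R ^+ 2.
  move=> a k b l; case: eqVneq => [->|hba].
    by case: eqVneq => [->|hlk]; [apply: Hxx | apply: Hkl; rewrite eq_sym].
  by apply: Hab; rewrite eq_sym.
have key : forall a k, \sum_b \sum_l v b l * \tr (E a k *m E b l) = c * v a k.
  move=> a k; rewrite (bigD1 a) //= [X in _ + X]big1 => [|b hb]; last first.
    under eq_bigr => l _ do rewrite gram (negbTE hb).
    by rewrite -big_distrl sumv /= mul0r.
  rewrite addr0; under eq_bigr => l _ do rewrite gram eqxx.
  rewrite (bigD1 k) //= eqxx; under eq_bigr => l hl do rewrite (negbTE hl).
  rewrite -big_distrl.
  have := sumv a; rewrite (bigD1 k) //= => /eqP; rewrite addrC addr_eq0 => /eqP ->.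
  rewrite /c; ring.
pose Y : 'M[C]_d := \sum_a \sum_k v a k *: E a k.
pose X : 'M[C]_d := rho - s%:M.
set S := \sum_a \sum_k v a k ^+ 2.
have trXE : forall a k, \tr (X *m E a k) = v a k.
  move=> a k; rewrite mulmxBl mul_scalar_mx linearB /= mxtraceZ Htr mxtrace_mulC.
  by rewrite /v /s /m; congr (_ - _); field; rewrite hM0 hdC.
have trXY : \tr (X *m Y) = S.
  rewrite mulmx_sumr linear_sum; apply: eq_bigr => a _.
  rewrite mulmx_sumr linear_sum; apply: eq_bigr => k _.
  by rewrite -scalemxAr linearZ /= trXE expr2.
have trYX : \tr (Y *m X) = S by rewrite mxtrace_mulC.
have trEY : forall a k, \tr (E a k *m Y) = c * v a k.
  move=> a k; rewrite mulmx_sumr linear_sum -(key a k); apply: eq_bigr => b _.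
  rewrite mulmx_sumr linear_sum; apply: eq_bigr => l _.
  by rewrite -scalemxAr linearZ.
have trYY : \tr (Y *m Y) = c * S.
  rewrite mulmx_suml linear_sum big_distrr; apply: eq_bigr => a _.
  rewrite mulmx_suml linear_sum big_distrr; apply: eq_bigr => k _.
  by rewrite -scalemxAl linearZ /= trEY; ring.
have trXX : \tr (X *m X) = \tr (rho *m rho) - s.
  rewrite mulmxBl !mulmxBr mul_mx_scalar !mul_scalar_mx !linearB /= !mxtraceZ.
  by rewrite mxtrace_scalar htr1 -mulr_natr /s; field.
have hY : adjmx Y = Y.
  rewrite adj_sum; apply: eq_bigr => a _; rewrite adj_sum; apply: eq_bigr => k _.
  by rewrite adjZ hvr ((HP a).1 k).1.
have hX : adjmx X = X by rewrite adjB adj_scalar hr.1 /s fmorphV rmorph_nat.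
clearbody X Y.
pose Z := X - c^-1 *: Y.
have hcir : (c^-1)^* = c^-1 by apply/CrealP; rewrite rpredV; apply/CrealP.
have hZ : adjmx Z = Z by rewrite adjB adjZ hX hY hcir.
have trZZ : \tr (Z *m Z) = (\tr (rho *m rho) - s) - c^-1 * S.
  rewrite /Z mulmxBl !mulmxBr -!scalemxAl -!scalemxAr !linearB /= !mxtraceZ.
  rewrite trXX trXY trYX trYY; field; by rewrite gt_eqF.
have hS : S <= c * (1 - s).
  have := tr_sq_ge0 hZ; rewrite trZZ subr_ge0 ler_pdivrMl // => h.
  apply: (le_trans h); apply: ler_wpM2l; first exact: ltW.
  rewrite lerD2r; by have := tr_sq_le hr; rewrite htr1 expr1n.
have hsum : \sum_(a < N) \sum_(k < M) (\tr (E a k *m rho)) ^+ 2 = S + (m ^+ 2 *+ M) *+ N.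
  have hrow : forall a, \sum_(k < M) (\tr (E a k *m rho)) ^+ 2 = \sum_k v a k ^+ 2 + m ^+ 2 *+ M.
    move=> a; under eq_bigr => k _ do rewrite pv.
    have -> : \sum_(k < M) (v a k + m) ^+ 2 = \sum_(k < M) (v a k ^+ 2 + m ^+ 2) + m * 2 * \sum_k v a k.
      rewrite big_distrr -big_split /=; apply: eq_bigr => k _; ring.
    by rewrite sumv mulr0 addr0 big_split /= sumr_const card_ord.
  by rewrite (eq_bigr _ (fun a _ => hrow a)) big_split /= sumr_const card_ord.
have hN : N%:R * (M%:R - 1) = d%:R ^+ 2 - 1 :> C.
  by rewrite hM1e -natrM HNM natrB ?natrX // expn_gt0 lt0n hd0.
have hN' : (N%:R : C) = (d%:R ^+ 2 - 1) / (M%:R - 1) by rewrite -hN mulfK.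
suff -> : povm_bound d M x = c * (1 - s) + m ^+ 2 *+ M *+ N by rewrite hsum lerD2r.
rewrite /povm_bound -[m ^+ 2 *+ M]mulr_natr -[(m ^+ 2 * M%:R) *+ N]mulr_natr hN' /c /e /s /m; field.
by rewrite hM1 hM0 hdC.
Qed.
End S2.

Set Implicit Arguments. Unset Strict Implicit.

Lemma jensen (C : numClosedFieldType) n (p w : 'I_n -> C) : (forall i, 0 <= p i) -> \sum_i p i = 1 ->
  (forall i, (w i)^* = w i) -> (\sum_i p i * w i) ^+ 2 <= \sum_i p i * w i ^+ 2.
Proof.
move=> hp hp1 hw; set mu := \sum_i p i * w i.
have hmu : mu^* = mu.
  apply/CrealP; apply: rpred_sum => i _; apply: rpredM; first exact: ger0_real.
  exact/CrealP.
have h0 : 0 <= \sum_i p i * (w i - mu) ^+ 2.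
  apply: sumr_ge0 => i _; apply: mulr_ge0 => //; apply: sq_ge0_real.
  apply/CrealP; apply: rpredB; exact/CrealP.
have e : \sum_i p i * (w i - mu) ^+ 2 = \sum_i p i * w i ^+ 2 - mu * 2 * mu + mu ^+ 2 * \sum_i p i.
  rewrite /mu !big_distrr -sumrB -big_split /=; apply: eq_bigr => i _.
  rewrite -/mu; ring.
move: h0; rewrite e hp1.
have -> : \sum_i p i * w i ^+ 2 - mu * 2 * mu + mu ^+ 2 * 1 = \sum_i p i * w i ^+ 2 - mu ^+ 2 by ring.
by rewrite subr_ge0.
Qed.

Lemma sum_sq_ge0 (C : numClosedFieldType) d N M (E : 'I_N -> 'I_M -> 'M[C]_d) rho :
  (forall a k, adjmx (E a k) = E a k) -> adjmx rho = rho ->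
  0 <= \sum_(a < N) \sum_(k < M) (\tr (E a k *m rho)) ^+ 2.
Proof.
move=> hE hr; apply: sumr_ge0 => a _; apply: sumr_ge0 => k _.
exact/sq_ge0_real/herm_tr_real.
Qed.

Theorem mainTheorem4 (C : numClosedFieldType)
  (dA NA MA : nat) (xA : C) (EA : 'I_NA -> 'I_MA -> 'M[C]_dA)
  (dB NB MB : nat) (xB : C) (EB : 'I_NB -> 'I_MB -> 'M[C]_dB)
  (rho : 'M[C]_(dA * dB)) :
  IC_NM_POVM xA EA -> IC_NM_POVM xB EB -> separable rho ->
  \sum_(a < NA) \sum_(k < MA) \sum_(b < NB) \sum_(j < MB)
     (\tr ((EA a k *t EB b j) *m rho)) ^+ 2
  <= povm_bound dA MA xA * povm_bound dB MB xB.
Proof.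
move=> hA hB [n [p [rA [rB [hp0 hp1 hrA hrB ->]]]]].
have hEA : forall a k, adjmx (EA a k) = EA a k by move=> a k; exact: ((hA.1.2.2.1 a).1 k).1.
have hEB : forall a k, adjmx (EB a k) = EB a k by move=> a k; exact: ((hB.1.2.2.1 a).1 k).1.
have tr_eq : forall a k b j, \tr ((EA a k *t EB b j) *m \sum_i p i *: (rA i *t rB i)) =
    \sum_i p i * (\tr (EA a k *m rA i) * \tr (EB b j *m rB i)).
  move=> a k b j; rewrite mulmx_sumr linear_sum; apply: eq_bigr => i _.
  by rewrite -scalemxAr linearZ /= tensmx_mul mxtrace_tens.
apply: (le_trans (y := \sum_(a < NA) \sum_(k < MA) \sum_(b < NB) \sum_(j < MB) \sum_i
   p i * (\tr (EA a k *m rA i) * \tr (EB b j *m rB i)) ^+ 2)).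
  apply: ler_sum => a _; apply: ler_sum => k _; apply: ler_sum => b _; apply: ler_sum => j _.
  rewrite tr_eq; apply: jensen => // i.
  by apply/CrealP; apply: rpredM; apply/CrealP; apply: herm_tr_real; rewrite ?(hrA i).1.1 ?(hrB i).1.1.
have -> : \sum_(a < NA) \sum_(k < MA) \sum_(b < NB) \sum_(j < MB) \sum_i
   p i * (\tr (EA a k *m rA i) * \tr (EB b j *m rB i)) ^+ 2 =
   \sum_i p i * ((\sum_(a < NA) \sum_(k < MA) (\tr (EA a k *m rA i)) ^+ 2) *
                 (\sum_(b < NB) \sum_(j < MB) (\tr (EB b j *m rB i)) ^+ 2)).
  symmetry.
  transitivity (\sum_i \sum_(a < NA) \sum_(k < MA) \sum_(b < NB) \sum_(j < MB)
     p i * (\tr (EA a k *m rA i) * \tr (EB b j *m rB i)) ^+ 2).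
    apply: eq_bigr => i _; rewrite mulr_suml big_distrr; apply: eq_bigr => a _.
    rewrite mulr_suml big_distrr; apply: eq_bigr => k _.
    rewrite mulr_sumr big_distrr; apply: eq_bigr => b _.
    rewrite mulr_sumr big_distrr; apply: eq_bigr => j _; by rewrite /= exprMn.
  rewrite exchange_big; apply: eq_bigr => a _; rewrite exchange_big; apply: eq_bigr => k _.
  rewrite exchange_big; apply: eq_bigr => b _; exact: exchange_big.
apply: (le_trans (y := \sum_i p i * (povm_bound dA MA xA * povm_bound dB MB xB))).
  apply: ler_sum => i _; apply: ler_wpM2l => //; apply: ler_pM.
  - exact: sum_sq_ge0 (hrA i).1.1.
  - exact: sum_sq_ge0 (hrB i).1.1.
  - exact: povm_single hA (hrA i).
  - exact: povm_single hB (hrB i).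
by rewrite -big_distrl /= hp1 mul1r.
Qed.
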